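(* Let $R$ be an orientable flat surface given by a holomorphic Abelian differential on a compact genus $g$ surface, and let $T$ be a geodesic triangulation of $R$ (by saddle connections, vertices at zeros). Orient each edge of $T$ so that its $x$-component is positive (for vertical edges the orientation is not defined). Let $W$ be a subset of the edges of $T$. Then there exists an integral multicurve $\Delta$ on $R$ such that: (a) $\Delta$ is disjoint from the vertices of $T$ and transverse to the edges; (b) $\Delta$ crosses each edge of $W$ at least once; (c) each time $\Delta$ crosses an edge $e\in W$, the crossing is from left to right with respect to the orientation of $e$; if $e$ is vertical, all crossings are from the same side; (d) for each edge $e$ of $T$, the intersection number $i(\Delta,e)\le n$, where $n$ depends only on $g$.
   Context: An integral multicurve is a finite set of oriented closed curves with integer weights (a negative weight corresponds to reversing orientation). The $x$-component of an edge refers to the real part of its holonomy (period of the Abelian differential along it). *)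

(* Defs.v *)
From HB Require Import structures.
From mathcomp Require Import all_boot all_order all_algebra.
From mathcomp Require Import all_classical all_reals all_analysis.
Set Implicit Arguments. Unset Strict Implicit. Unset Printing Implicit Defensive.
Import Order.TTheory GRing.Theory Num.Theory.
Local Open Scope ring_scope.

(* Combinatorial encoding of a flat surface R (given by an Abelian          *)
(* differential) together with a geodesic triangulation T of R.             *)
(*   - triangles are indexed by 'I_nF; side (t,k), k : 'I_3, of triangle t   *)
(*     is oriented counterclockwise (triangle on its left) and goes from     *)
(*     vertex k to vertex k+1 of t;                                          *)
(*   - [tglue] pairs the sides (fixed-point-free involution); the gluing is   *)
(*     orientation reversing, so the glued surface is closed and oriented;   *)
(*   - [hol s] is the holonomy (period of the Abelian differential, as a     *)
(*     vector (x,y) in R^2) of side s with its ccw orientation; glued sides  *)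
(*     have opposite holonomy (translation gluing), each triangle closes up  *)
(*     and is a nondegenerate, positively oriented Euclidean triangle.       *)

Definition cross2 {R : realType} (u v : R * R) : R := u.1 * v.2 - u.2 * v.1.
Definition dot2 {R : realType} (u v : R * R) : R := u.1 * v.1 + u.2 * v.2.
Definition norm2 {R : realType} (u : R * R) : R := Num.sqrt (dot2 u u).
Definition opp2 {R : realType} (u : R * R) : R * R := (- u.1, - u.2).

Record flat_triangulation (R : realType) := FlatTriangulation {
  nF : nat;
  tglue : 'I_nF * 'I_3 -> 'I_nF * 'I_3;
  hol : 'I_nF * 'I_3 -> R * R;
  tglueK : forall s, tglue (tglue s) = s;
  tglue_nofix : forall s, tglue s != s;
  hol_tglue : forall s, hol (tglue s) = opp2 (hol s);
  hol_closed1 : forall t : 'I_nF, \sum_(k < 3) (hol (t, k)).1 = 0;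
  hol_closed2 : forall t : 'I_nF, \sum_(k < 3) (hol (t, k)).2 = 0;
  hol_ccw : forall (t : 'I_nF) (k : 'I_3), 0 < cross2 (hol (t, k)) (hol (t, ordS k))
}.

Arguments nF {R} f : rename.
Arguments tglue {R} f _ : rename.
Arguments hol {R} f _ : rename.

Notation side S := ('I_(nF S) * 'I_3)%type.

Section Surface.
Variables (R : realType) (S : flat_triangulation R).

(* Corner (t,k) = vertex k of triangle t (start of side (t,k)).  Rotating   *)
(* around a vertex: the side (t,k) is glued to (t',j), and vertex k of t is *)
(* identified with vertex j+1 of t'.  Vertices of T = orbits of [rot].     *)
Definition rot (c : side S) : side S := ((tglue S c).1, ordS (tglue S c).2).

Definition num_vertices : nat := #|froots rot|.

Definition adj : rel 'I_(nF S) :=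
  fun t t' => [exists k : 'I_3, (tglue S (t, k)).1 == t'].
Definition connected_surface : Prop := forall t t' : 'I_(nF S), connect adj t t'.

(* Genus via Euler characteristic V - E + F = 2 - 2g, with E = 3F/2. *)
Definition has_genus (g : nat) : Prop := (2 * num_vertices + 4 * g = 4 + nF S)%N.

Definition corner_angle (c : side S) : R :=
  let u := hol S c in
  let v := opp2 (hol S (c.1, ord_pred c.2)) in
  acos (dot2 u v / (norm2 u * norm2 v)).

Definition cone_angle (c : side S) : R :=
  \sum_(c' : side S | fconnect rot c c') corner_angle c'.

Definition vertices_at_zeros : Prop := forall c : side S, 2 * pi < cone_angle c.

(* A closed curve is recorded (up to isotopy preserving transversality) by  *)
(* the nonempty cyclic sequence of its crossings: a crossing is the side c  *)
(* through which the curve leaves triangle c.1 (entering triangle           *)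
(* (tglue c).1); the next crossing must be a side of the triangle entered.  *)
Definition closed_curve (cs : seq (side S)) : bool :=
  (0 < size cs)%N &&
  cycle (fun c d : side S => d.1 == (tglue S c).1) cs.

(* Weighted oriented curves: weight w (negative = reversed orientation). *)
Definition integral_multicurve (D : seq (int * seq (side S))) : Prop :=
  forall wc, wc \in D -> wc.1 != 0 /\ closed_curve wc.2.

Definition on_edge (s c : side S) : bool := (c == s) || (c == tglue S s).

Definition inter_num (D : seq (int * seq (side S))) (s : side S) : nat :=
  (\sum_(wc <- D) `|wc.1|%N * count (on_edge s) wc.2)%N.

(* A crossing through side c by a curve of weight w goes from the left to *)
(* the right of the vector hol c (the triangle c.1 lies to its left) when  *)
(* w > 0, and from right to left when w < 0.  Hence, relative to the edge  *)
(* orientation with positive x-component, it is left-to-right iff          *)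
(* w * x(hol c) > 0.                                                        *)
Definition crosses_left_to_right (w : int) (c : side S) : bool :=
  0 < w%:~R * (hol S c).1.

(* Relative to the fixed orientation hol s of the edge of s, the crossing  *)
(* through c (on that edge) is left-to-right iff this boolean is true.    *)
Definition crossing_side (s : side S) (w : int) (c : side S) : bool :=
  (0 < w) == (c == s).

End Surface.

(* Main.v *)
Require Import Defs.
From HB Require Import structures.
From mathcomp Require Import all_boot all_order all_algebra.
From mathcomp Require Import all_classical all_reals all_analysis.
From mathcomp Require Import ring lra zify.
Import Order.TTheory GRing.Theory Num.Theory.
Local Open Scope ring_scope.
Set Implicit Arguments. Unset Strict Implicit.

Section Geo.
Variable R : realType.

Definition Rot (a : R) (w : R * R) : R * R :=
  (cos a * w.1 - sin a * w.2, sin a * w.1 + cos a * w.2).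

Lemma RotD a b w : Rot a (Rot b w) = Rot (a + b) w.
Proof. rewrite /Rot /= cosD sinD; congr (_, _); ring. Qed.

Lemma Rot0 w : Rot 0 w = w.
Proof. by rewrite /Rot cos0 sin0; case: w => x y /=; congr (_,_); ring. Qed.

Lemma RotDpi a w : Rot (a + pi) w = (- (Rot a w).1, - (Rot a w).2).
Proof. rewrite /Rot /= cosDpi sinDpi; congr (_,_); ring. Qed.

Lemma Rot_fix (a : R) w : w.1 ^+ 2 + w.2 ^+ 2 = 1 -> Rot a w = w -> cos a = 1.
Proof.
move=> Hw HR.
have -> : cos a = w.1 * (Rot a w).1 + w.2 * (Rot a w).2.
  by rewrite /Rot /=; transitivity (cos a * (w.1 ^+ 2 + w.2 ^+ 2));
   [rewrite Hw mulr1 | ring].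
by rewrite HR -Hw; ring.
Qed.

Lemma Rot_chain (w : nat -> R * R) (phi : nat -> R) m :
  (forall i, (i < m)%N -> w i = Rot (phi i) (w i.+1)) ->
  w 0%N = Rot (\sum_(i < m) phi i) (w m).
Proof.
elim: m => [|m IH] H; first by rewrite big_ord0 Rot0.
rewrite big_ord_recr /= -RotD -H // IH // => i Hi; apply: H; exact: ltnW.
Qed.

Definition nrm (u : R * R) : R * R := (u.1 / @norm2 R u, u.2 / @norm2 R u).

Lemma norm2_sqr (u : R * R) : norm2 u ^+ 2 = u.1 ^+ 2 + u.2 ^+ 2.
Proof.
rewrite /norm2 sqr_sqrtr /dot2; first by rewrite !expr2.
by rewrite addr_ge0 // -expr2 sqr_ge0.
Qed.

Lemma norm2_ge0 (u : R * R) : 0 <= norm2 u.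
Proof. exact: sqrtr_ge0. Qed.

Lemma norm2_gt0 (u : R * R) : u != (0, 0) -> 0 < norm2 u.
Proof.
move=> Hu; rewrite lt_neqAle norm2_ge0 andbT; apply/eqP => H0.
have : u.1 ^+ 2 + u.2 ^+ 2 = 0 by rewrite -norm2_sqr -H0 expr0n.
clear H0; case: u Hu => x y /= Hu Hxy.
have /andP[hx hy] : (x ^+ 2 == 0) && (y ^+ 2 == 0).
  by rewrite -(paddr_eq0 (sqr_ge0 x) (sqr_ge0 y)) Hxy.
move: hx hy; rewrite !sqrf_eq0 => /eqP hx /eqP hy.
by move: Hu; rewrite hx hy eqxx.
Qed.


Lemma nrm_unit (u : R * R) : u != (0, 0) -> (nrm u).1 ^+ 2 + (nrm u).2 ^+ 2 = 1.
Proof.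
move=> Hu; have Hn := norm2_gt0 Hu; have Hs := norm2_sqr u.
rewrite /nrm /= !expr_div_n -mulrDl -Hs divff //.
by rewrite expf_neq0 // gt_eqF.
Qed.

Lemma norm2_opp (u : R * R) : norm2 (opp2 u) = norm2 u.
Proof. by rewrite /norm2 /dot2 /opp2 /= !mulrNN. Qed.

Lemma nrm_opp (u : R * R) : nrm (opp2 u) = (- (nrm u).1, - (nrm u).2).
Proof. by rewrite /nrm norm2_opp /opp2 /= !mulNr. Qed.

Lemma cross_nz (u v : R * R) : 0 < cross2 u v -> u != (0, 0) /\ v != (0, 0).
Proof.
case: u => a b; case: v => c d; rewrite /cross2 /= => H; split; apply/negP => /eqP [] Ha Hb;
  by move: H; rewrite Ha Hb ?mul0r ?mulr0 ?subrr ?ltxx.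
Qed.


Definition ang (u v : R * R) : R := acos (@dot2 R u v / (@norm2 R u * @norm2 R v)).

Lemma corner_rot (u v : R * R) : 0 < cross2 u v ->
  [/\ 0 <= ang u v, ang u v < pi & nrm v = Rot (ang u v) (nrm u)].
Proof.
move=> Hc; have [Hu Hv] := cross_nz Hc.
have Nu := norm2_gt0 Hu; have Nv := norm2_gt0 Hv.
have Su := norm2_sqr u; have Sv := norm2_sqr v.
set a := dot2 u v / (norm2 u * norm2 v).
set s := cross2 u v / (norm2 u * norm2 v).
have Hs : 0 < s by rewrite divr_gt0 // mulr_gt0.
have Hpq : 0 < norm2 u * norm2 v by rewrite mulr_gt0.
have Ha : 1 - a ^+ 2 = s ^+ 2.
  have L : (norm2 u * norm2 v) ^+ 2 = dot2 u v ^+ 2 + cross2 u v ^+ 2.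
    by rewrite exprMn Su Sv /dot2 /cross2; ring.
  have Lp : dot2 u v ^+ 2 + cross2 u v ^+ 2 != 0.
    by rewrite gt_eqF // ltr_wpDl ?sqr_ge0 // exprn_gt0.
  by rewrite /a /s !expr_div_n L; field.
have Ha1 : a ^+ 2 < 1.
  by rewrite -subr_gt0 Ha exprn_gt0.
have Hab : -1 < a < 1.
  move: Ha1; rewrite expr2 => Ha1.
  apply/andP; split; nra.
have Hab' : -1 <= a <= 1 by case/andP: Hab => h1 h2; rewrite !ltW.
split.
- exact: acos_ge0.
- by apply: acos_ltpi; case/andP: Hab => h1 h2; rewrite h1 ltW.
- have Hcos : cos (ang u v) = a by rewrite /ang acosK // in_itv.
  have Hsin : sin (ang u v) = s.
    by rewrite /ang sin_acos // Ha sqrtr_sqr gtr0_norm.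
  rewrite /Rot Hcos Hsin /nrm /a /s /=.
  have e1 : dot2 u v * u.1 - cross2 u v * u.2 = norm2 u ^+ 2 * v.1.
    by rewrite Su /dot2 /cross2; ring.
  have e2 : cross2 u v * u.1 + dot2 u v * u.2 = norm2 u ^+ 2 * v.2.
    by rewrite Su /dot2 /cross2; ring.
  congr (_, _).
  + transitivity ((dot2 u v * u.1 - cross2 u v * u.2) / (norm2 u ^+ 2 * norm2 v)).
      by rewrite e1; field; rewrite !gt_eqF.
    by field; rewrite !gt_eqF.
  + transitivity ((cross2 u v * u.1 + dot2 u v * u.2) / (norm2 u ^+ 2 * norm2 v)).
      by rewrite e2; field; rewrite !gt_eqF.
    by field; rewrite !gt_eqF.
Qed.

End Geo.
Arguments nrm {R}. Arguments Rot {R}. Arguments ang {R}.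


Section Trig.
Variable R : realType.

Lemma acos_cos_eq {y c : R} : 0 <= y -> y <= pi -> cos y = c -> y = acos c.
Proof.
move=> h0 h1 <-; rewrite cosK //; by rewrite in_itv /= h0 h1.
Qed.

Lemma trig1 (x : R) : 0 <= x -> x < pi *+ 3 -> cos x = -1 -> x <= pi.
Proof.
move=> h0 h3 hc; rewrite leNgt; apply/negP => hx.
have hpi := pi_gt0 R.
set y := x - pi *+ 2.
have cy : cos y = -1 by rewrite -hc -(cosD2pi y) /y subrK.
have [hy|hy] := leP 0 y.
  have := acos_cos_eq hy _ cy; rewrite acosN1 => hyp.
  have : y < pi by rewrite /y; move: h3; rewrite !mulrS; lra.
  lra.
have cy' : cos (- y) = -1 by rewrite cosN.
have := acos_cos_eq _ _ cy'; rewrite acosN1 => hyp.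
have : - y < pi by rewrite /y; move: hx; rewrite !mulrS; lra.
move: hyp; rewrite /y; move: hx hy; rewrite /y !mulrS; lra.
Qed.

Lemma trig2 (x : R) : cos x = 1 -> pi *+ 2 < x -> pi *+ 4 <= x.
Proof.
move=> hc hx; rewrite leNgt; apply/negP => h4.
have hpi := pi_gt0 R.
set y := x - pi *+ 2.
have cy : cos y = 1 by rewrite -hc -(cosD2pi y) /y subrK.
have [hy|hy] := leP y pi.
  have := acos_cos_eq _ hy cy; rewrite acos1 => hyp.
  have : 0 < y by rewrite /y; lra.
  lra.
set z := pi *+ 2 - y.
have cz : cos z = 1 by rewrite /z addrC cosD2pi cosN.
have := acos_cos_eq _ _ cz; rewrite acos1 => hyp.
have : 0 < z by rewrite /z /y; move: h4; rewrite !mulrS; lra.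
move: hyp; rewrite /z /y; move: h4 hy; rewrite /y !mulrS; lra.
Qed.

End Trig.

Section Surf.
Variables (R : realType) (S : flat_triangulation R).

Lemma hol_nz (c : side S) : hol S c != (0, 0).
Proof.
case: c => t k; have := hol_ccw t k => /cross_nz [] //.
Qed.

Lemma corner_cross (c : side S) :
  0 < cross2 (hol S c) (opp2 (hol S (c.1, ord_pred c.2))).
Proof.
case: c => t k /=; have := hol_ccw t (ord_pred k); rewrite ord_predK.
rewrite /cross2 /opp2 /=.
set a := hol S (t, ord_pred k); set b := hol S (t, k).
have -> : b.1 * - a.2 - b.2 * - a.1 = a.1 * b.2 - a.2 * b.1 by ring.
done.
Qed.

Lemma corner_facts (c : side S) :
  [/\ 0 <= corner_angle c, corner_angle c < pi &
      nrm (opp2 (hol S (c.1, ord_pred c.2))) = Rot (corner_angle c) (nrm (hol S c))].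
Proof. have := corner_rot (corner_cross c). rewrite /ang /corner_angle /=. done. Qed.

Lemma tri_step (t : 'I_(nF S)) (k : 'I_3) :
  nrm (hol S (t, k)) = Rot (corner_angle (t, ordS k) + pi) (nrm (hol S (t, ordS k))).
Proof.
have [_ _ H] := corner_facts (t, ordS k).
move: H; rewrite /= ordSK nrm_opp RotDpi => <-.
by case: (nrm _) => ? ? /=; rewrite !opprK.
Qed.

Lemma tri_sum (t : 'I_(nF S)) : \sum_(k < 3) corner_angle (t, k) <= pi.
Proof.
have e3 : ordS (ordS (ordS (ord0 : 'I_3))) = ord0 by apply/val_inj.
have H := tri_step t ord0.
rewrite (tri_step t (ordS ord0)) (tri_step t (ordS (ordS ord0))) e3 !RotD in H.
have := Rot_fix (nrm_unit (hol_nz (t, ord0))) (esym H).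
have [a0 b0 _] := corner_facts (t, ord0).
have [a1 b1 _] := corner_facts (t, ordS ord0).
have [a2 b2 _] := corner_facts (t, ordS (ordS ord0)).
have -> : \sum_(k < 3) corner_angle (t, k) =
   corner_angle (t, ord0) + corner_angle (t, ordS ord0) + corner_angle (t, ordS (ordS ord0)).
  rewrite !big_ord_recl big_ord0 addr0 addrA; congr (_ + _ + _).
  - by congr corner_angle; congr (_, _); apply/val_inj.
  - by congr corner_angle; congr (_, _); apply/val_inj.
move: a0 b0 a1 b1 a2 b2.
set x0 := corner_angle (t, ord0).
set x1 := corner_angle (t, ordS ord0).
set x2 := corner_angle (t, ordS (ordS ord0)).
move=> a0 b0 a1 b1 a2 b2 hc.
move: hc; rewrite (_ : _ + _ = (x0 + x1 + x2 + pi) + pi *+ 2); last first.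
  by rewrite !mulrS; ring.
rewrite cosD2pi cosDpi => hc.
apply: trig1; first by lra.
  by rewrite !mulrS; lra.
by rewrite -[cos _]opprK hc.
Qed.

Lemma rot_inj : injective (@Defs.rot R S).
Proof.
move=> x y; rewrite /Defs.rot => H.
have : tglue S x = tglue S y.
  move: H; case: (tglue S x) => a b; case: (tglue S y) => a' b' H.
  have hb : b = b' := ordS_inj (congr1 snd H).
  have ha : a = a' := congr1 fst H.
  by rewrite ha hb.
by move=> /(congr1 (tglue S)); rewrite !tglueK.
Qed.

Lemma vert_step (x : side S) :
  nrm (hol S x) = Rot (corner_angle (Defs.rot x)) (nrm (hol S (Defs.rot x))).
Proof.
have [_ _ H] := corner_facts (Defs.rot x).
rewrite -H; congr nrm; rewrite /Defs.rot /= ordSK.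
have -> : ((tglue S x).1, (tglue S x).2) = tglue S x by case: (tglue S x).
by rewrite hol_tglue /opp2 /= !opprK; case: (hol S x).
Qed.

Lemma sum_traject (f : side S -> side S) (F : side S -> R) c m :
  \sum_(x <- traject f c m) F x = \sum_(i < m) F (iter i f c).
Proof.
elim: m => [|m IH]; first by rewrite big_nil big_ord0.
by rewrite trajectSr big_rcons /= IH big_ord_recr.
Qed.

Lemma shift_sum (g : nat -> R) n : g n.+1 = g 0%N ->
  \sum_(i < n.+1) g i = \sum_(i < n.+1) g i.+1.
Proof.
move=> H; rewrite big_ord_recl big_ord_recr /= H addrC; congr (_ + _).
Qed.

Lemma cone_cos (c : side S) : cos (cone_angle c) = 1.
Proof.
have Hinj := rot_inj.
set m := order (@Defs.rot R S) c.
pose w i := nrm (hol S (iter i (@Defs.rot R S) c)).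
pose phi i := corner_angle (iter i.+1 (@Defs.rot R S) c).
have Hc : w 0%N = Rot (\sum_(i < m) phi i) (w m).
  apply: Rot_chain => i _; rewrite /w /phi iterS; exact: vert_step.
have Hm : w m = w 0%N by rewrite /w /m iter_order.
rewrite Hm in Hc.
have Hcos := Rot_fix (nrm_unit (hol_nz c)) (esym Hc).
have -> : cone_angle c = \sum_(i < m) phi i; last by [].
rewrite /cone_angle.
rewrite (eq_bigl (fun c' => c' \in orbit (@Defs.rot R S) c)); last first.
  by move=> c'; rewrite fconnect_orbit.
rewrite -big_uniq ?orbit_uniq // /orbit -/m sum_traject.
have hit : iter m (@Defs.rot R S) c = c by rewrite /m iter_order.
have : (0 < m)%N by exact: order_gt0.
rewrite /phi; clear Hc Hcos Hm; move: hit; case: m => // n hit _.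
apply: (shift_sum (g := fun i => corner_angle (iter i (@Defs.rot R S) c))); by rewrite hit.
Qed.

Lemma total_le : \sum_(c : side S) corner_angle c <= pi *+ nF S.
Proof.
have -> : \sum_(c : side S) corner_angle c =
    \sum_(t : 'I_(nF S)) \sum_(k < 3) corner_angle (t, k).
  by rewrite pair_big; apply: eq_bigr => -[t k].
have -> : pi *+ nF S = \sum_(t : 'I_(nF S)) (pi : R).
  by rewrite sumr_const card_ord.
by apply: ler_sum => t _; exact: tri_sum.
Qed.

Lemma vert_ge : vertices_at_zeros S ->
  pi *+ 4 *+ num_vertices S <= \sum_(c : side S) corner_angle c.
Proof.
move=> Hz.
have sym := fconnect_sym rot_inj.
rewrite (partition_big (froot (@Defs.rot R S)) (froots (@Defs.rot R S))); last first.
  by move=> i _; exact: (roots_root sym).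
have -> : pi *+ 4 *+ num_vertices S = \sum_(r | froots (@Defs.rot R S) r) (pi *+ 4 : R).
  by rewrite sumr_const.
apply: ler_sum => r Hr.
have -> : \sum_(i | true && (froot (@Defs.rot R S) i == r)) corner_angle i = cone_angle r.
  rewrite /cone_angle; apply: eq_bigl => c /=.
  move: Hr; rewrite /roots => /eqP Hr.
  by rewrite -{1}Hr (root_connect sym) sym.
apply: trig2; first exact: cone_cos.
by have := Hz r; rewrite mulr_natl.
Qed.

Lemma nF_bound g : has_genus S g -> vertices_at_zeros S -> (nF S <= 8 * g)%N.
Proof.
move=> Hg Hz.
have H1 := vert_ge Hz; have H2 := total_le.
have H : pi *+ 4 *+ num_vertices S <= pi *+ nF S := le_trans H1 H2.
have hpi := pi_gt0 R.
have H4 : (4 * num_vertices S <= nF S)%N.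
  rewrite -(ler_nat R); move: H; rewrite -mulrnA -!(mulr_natr pi) ler_pM2l //.
move: Hg; rewrite /has_genus => Hg; lia.
Qed.

End Surf.


Section Eps.
Variables (R : realType) (S : flat_triangulation R).

Lemma eps_one (a b e : R) : a != 0 -> 0 < e -> e <= `|a| / (`|b| + 1) -> e * `|b| < `|a|.
Proof.
move=> ha he hle.
have hA : 0 < `|a| by rewrite normr_gt0.
have hB : 0 <= `|b| by [].
have hB1 : 0 < `|b| + 1 by lra.
have E : `|a| / (`|b| + 1) * `|b| = `|a| - `|a| / (`|b| + 1).
  by field; rewrite gt_eqF.
have hq : 0 < `|a| / (`|b| + 1) by rewrite divr_gt0.
have := ler_wpM2r hB hle; rewrite E; lra.
Qed.

Lemma exists_eps : exists eps : R, 0 < eps /\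
  forall c : side S, (hol S c).1 != 0 -> eps * `|(hol S c).2| < `|(hol S c).1|.
Proof.
suff H : forall l : seq (side S), exists eps : R, 0 < eps /\
  forall c, c \in l -> (hol S c).1 != 0 -> eps * `|(hol S c).2| < `|(hol S c).1|.
  have [eps [h1 h2]] := H (enum [set: side S]).
  by exists eps; split => // c; apply: h2; rewrite mem_enum inE.
elim=> [|c l [eps [he H]]]; first by exists 1; split.
pose ec : R := if (hol S c).1 == 0 then 1 else `|(hol S c).1| / (`|(hol S c).2| + 1).
have hec : 0 < ec.
  rewrite /ec; case: ifP => // /negbT h.
  by rewrite divr_gt0 ?normr_gt0 //; apply: ltr_wpDl.
exists (Num.min eps ec); split; first by rewrite lt_min he hec.
move=> d; rewrite inE => /orP [/eqP -> | hd] h1.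
  apply: eps_one => //; first by rewrite lt_min he hec.
  by rewrite ge_min /ec (negbTE h1) lexx orbT.
apply: le_lt_trans (H d hd h1).
apply: ler_wpM2r => //.
by rewrite ge_min lexx.
Qed.

End Eps.

Section Flow.
Variables (R : realType) (S : flat_triangulation R) (eps : R).
Hypothesis Heps : 0 < eps.
Hypothesis Hb : forall c : side S, (hol S c).1 != 0 -> eps * `|(hol S c).2| < `|(hol S c).1|.

Definition fl (c : side S) : R := (hol S c).1 + eps * (hol S c).2.

Lemma fl_tglue c : fl (tglue S c) = - fl c.
Proof. by rewrite /fl hol_tglue /opp2 /=; ring. Qed.

Lemma fl_pos c : 0 < (hol S c).1 -> 0 < fl c.
Proof.
move=> h; have := @Hb c (negbT (gt_eqF h)); rewrite (gtr0_norm h) /fl => H.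
have E : `|eps * (hol S c).2| = eps * `|(hol S c).2| by rewrite normrM (gtr0_norm Heps).
have := ler_norm (- (eps * (hol S c).2)); rewrite normrN E; lra.
Qed.

Lemma fl_neg c : (hol S c).1 < 0 -> fl c < 0.
Proof.
move=> h; have := @Hb c (negbT (lt_eqF h)); rewrite (ltr0_norm h) /fl => H.
have E : `|eps * (hol S c).2| = eps * `|(hol S c).2| by rewrite normrM (gtr0_norm Heps).
have := ler_norm (eps * (hol S c).2); rewrite E; lra.
Qed.

Lemma fl_sign c : (hol S c).1 != 0 -> (0 < fl c) = (0 < (hol S c).1).
Proof.
move=> h; case/orP: (lt_total h) => [hn|hp].
- by rewrite (lt_gtF hn) (lt_gtF (fl_neg hn)).
- by rewrite hp fl_pos.
Qed.

Lemma fl_nz c : fl c != 0.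
Proof.
case: (boolP ((hol S c).1 == 0)) => [/eqP he|h].
- rewrite /fl he add0r mulf_neq0 //; first by rewrite gt_eqF.
  apply/negP => /eqP h2; move: (hol_nz c); case: (hol S c) he h2 => a b /= -> -> .
  by rewrite eqxx.
- case/orP: (lt_total h) => [hn|hp].
  + by rewrite lt_eqF // fl_neg.
  + by rewrite gt_eqF // fl_pos.
Qed.

Lemma fl_sum (t : 'I_(nF S)) : \sum_(k < 3) fl (t, k) = 0.
Proof.
rewrite /fl big_split /= -mulr_sumr hol_closed1 hol_closed2; ring.
Qed.

Definition e' (c d : side S) : bool := (d.1 == (tglue S c).1) && (0 < fl d).

Lemma path_pos x p : path e' x p -> all (fun y => 0 < fl y) p.
Proof.
by elim: p x => //= y p IH x /andP [/andP [_ hy] hp]; rewrite hy (IH y).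
Qed.

Lemma cyc_exists a : 0 < fl a -> exists p, cycle e' (a :: p) && uniq (a :: p).
Proof.
move=> Ha.
pose A := [set t | [exists d, connect e' a d && ((tglue S d).1 == t)]].
have closA : forall s, s.1 \in A -> 0 < fl s -> (tglue S s).1 \in A.
  move=> s; rewrite inE => /existsP [d /andP [hd /eqP ht]] hs.
  rewrite inE; apply/existsP; exists s; rewrite eqxx andbT.
  apply: connect_trans hd _; apply: connect1; by rewrite /e' hs andbT ht eqxx.
case: (boolP (a.1 \in A)) => HA.
  move: HA; rewrite inE => /existsP [d /andP [/connectP [p0 hp0 hd] /eqP ht]].
  move: hd; case: (shortenP hp0) => p' hp' hu _ hd.
  exists p'; rewrite hu andbT /= rcons_path hp' /= -hd.
  by rewrite /e' ht eqxx Ha.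
exfalso.
have Hsum : \sum_(s : side S | s.1 \in A) fl s = 0.
  have -> : \sum_(s : side S | s.1 \in A) fl s = \sum_(t in A) \sum_(k < 3) fl (t, k).
    by rewrite pair_big_dep; apply: eq_big => [[t k]|[t k] _] //=; rewrite andbT.
  by apply: big1 => t _; exact: fl_sum.
rewrite (bigID (fun s : side S => (tglue S s).1 \in A)) /= in Hsum.
set X := \sum_(s | (s.1 \in A) && ((tglue S s).1 \in A)) fl s.
have HX : X = - X.
  rewrite {2}/X (reindex_inj (can_inj (@tglueK R S))) /= -sumrN.
  apply: eq_big => s; first by rewrite tglueK andbC.
  by move=> _; rewrite fl_tglue opprK.
have Hneg : \sum_(s | (s.1 \in A) && ~~ ((tglue S s).1 \in A)) fl s < 0.
  rewrite (bigD1 (tglue S a)) /=; last first.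
    rewrite tglueK HA andbT inE; apply/existsP; exists a.
    by rewrite connect0 eqxx.
  have : \sum_(s | ((s.1 \in A) && ((tglue S s).1 \notin A)) && (s != tglue S a)) fl s <= 0.
    apply: sumr_le0 => s /andP [/andP [h1 h2] _]; rewrite leNgt; apply/negP => hs.
    by move: h2; rewrite closA.
  rewrite fl_tglue; lra.
move: Hsum; rewrite -/X; lra.
Qed.

End Flow.

Unset Implicit Arguments.

Lemma count_le1 (R : realType) (S : flat_triangulation R) (eps : R) (s : side S) (l : seq (side S)) :
  uniq l -> all (fun y => 0 < fl eps y) l -> (count (on_edge s) l <= 1)%N.
Proof.
move=> hu hall.
pose r := if 0 < fl eps s then s else tglue S s.
rewrite -size_filter.
have : (size (seq.filter (on_edge s) l) <= size [:: r])%N.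
  apply: uniq_leq_size; first exact: filter_uniq.
  move=> x; rewrite mem_filter => /andP [he hx]; have hp := allP hall x hx.
  rewrite inE /r; move: he; rewrite /on_edge => /orP [/eqP hs| /eqP hs].
    by move: hp; rewrite hs => ->.
  move: hp; rewrite hs fl_tglue oppr_gt0 => hp.
  by rewrite (lt_gtF hp).
by [].
Qed.

Theorem lemma8p9 (g : nat) :
  exists n : nat,
  forall (R : realType) (S : flat_triangulation R),
    connected_surface S -> has_genus S g -> vertices_at_zeros S ->
  forall W : {set side S}, (forall s, (tglue S s \in W) = (s \in W)) ->
  exists D : seq (int * seq (side S)),
    [/\ integral_multicurve D,
        (* (b) *)
        (forall s, s \in W -> exists2 wc, wc \in D & has (on_edge s) wc.2),
        (* (c) non-vertical edges of W: every crossing is left to right *)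
        (forall s, s \in W -> (hol S s).1 != 0 ->
           forall wc, wc \in D -> forall c, c \in wc.2 -> on_edge s c ->
             crosses_left_to_right wc.1 c),
        (* (c) vertical edges of W: all crossings from the same side *)
        (forall s, s \in W -> (hol S s).1 = 0 ->
           exists b : bool, forall wc, wc \in D -> forall c, c \in wc.2 ->
             on_edge s c -> crossing_side s wc.1 c = b)
      & (* (d) *)
        (forall s : side S, (inter_num D s <= n)%N)].
Proof.
exists (24 * g)%N => R S _ Hg Hz W HW.
have HnF := nF_bound Hg Hz.
have [eps [Heps Hb]] := exists_eps S.
have Hex : forall a : side S, exists p : seq (side S),
    (0 < fl eps a) ==> (cycle (e' eps) (a :: p) && uniq (a :: p)).
  move=> a; case: (boolP (0 < fl eps a)) => Ha; last by exists [::].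
  by have [p Hp] := cyc_exists Ha; exists p.
pose cyc a := xchoose (Hex a).
have Hcyc : forall a, 0 < fl eps a -> cycle (e' eps) (a :: cyc a) && uniq (a :: cyc a).
  by move=> a Ha; exact: (implyP (xchooseP (Hex a)) Ha).
have Hpos : forall a, 0 < fl eps a -> all (fun y => 0 < fl eps y) (a :: cyc a).
  move=> a Ha; have /andP [hc _] := Hcyc a Ha.
  move: hc; rewrite /= rcons_path => /andP [hp _].
  by rewrite Ha (path_pos hp).
pose A := [set a in W | 0 < fl eps a].
pose D := [seq ((1%:Z), a :: cyc a) | a <- enum A].
have HD : forall wc, wc \in D -> exists a, [/\ a \in W, 0 < fl eps a & wc = (1%:Z, a :: cyc a)].
  move=> wc /mapP [a]; rewrite mem_enum inE => /andP [haW ha] ->.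
  by exists a.
have Hrep : forall s, s \in W -> exists a, [/\ a \in W, 0 < fl eps a & on_edge s a].
  move=> s hs; case: (boolP (0 < fl eps s)) => h.
    by exists s; rewrite hs h /on_edge eqxx.
  exists (tglue S s); rewrite HW hs /on_edge eqxx orbT fl_tglue oppr_gt0; split => //.
  by rewrite lt_neqAle (fl_nz Heps Hb) leNgt h.
exists D; split.
- move=> wc /HD [a [_ ha ->]]; split => //.
  rewrite /closed_curve /=; have /andP [hc _] := Hcyc a ha.
  by apply: (sub_cycle _ hc) => x y /andP [].
- move=> s /Hrep [a [haW ha hon]]; exists (1%:Z, a :: cyc a).
    by apply/mapP; exists a => //; rewrite mem_enum inE haW ha.
  by rewrite /= hon.
- move=> s hs h1 wc /HD [a [_ ha ->]] c hc hon /=.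
  have hcp : 0 < fl eps c := allP (Hpos a ha) c hc.
  have h1c : (hol S c).1 != 0.
    move: hon; rewrite /on_edge => /orP [/eqP -> // | /eqP ->].
    by rewrite hol_tglue /opp2 /= oppr_eq0.
  rewrite /crosses_left_to_right (_ : (1%Z)%:~R = 1) ?mul1r; last by [].
  by rewrite -(fl_sign Heps Hb h1c).
- move=> s hs h0; exists (0 < fl eps s) => wc /HD [a [_ ha ->]] c hc hon /=.
  have hcp : 0 < fl eps c := allP (Hpos a ha) c hc.
  rewrite /crossing_side; move: hon; rewrite /on_edge => /orP [/eqP hcs | /eqP hcs].
    by rewrite hcs eqxx -hcs hcp.
  have -> : (c == s) = false by rewrite hcs; apply/negbTE; exact: tglue_nofix.
  move: hcp; rewrite hcs fl_tglue oppr_gt0 => hcp.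
  by rewrite (lt_gtF hcp).
- move=> s; rewrite /inter_num big_map big_seq.
  apply: (@leq_trans (\sum_(a <- enum A | a \in enum A) 1)%N).
    apply: leq_sum => a; rewrite mem_enum inE => /andP [_ ha].
    have /andP [_ hu] := Hcyc a ha.
    have := @count_le1 _ _ eps s _ hu (Hpos a ha).
    by rewrite [X in (X * _)%N]/= mul1n.
  rewrite -big_seq sum1_size -cardE.
  apply: (leq_trans (max_card A)); rewrite card_prod !card_ord; lia.
Qed.
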